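(* For all positive integers $r,s,k$ with $1\le r,s\le k$, $$\sum_{n\ge0}\big|\mathcal A_{2n+1}^{(k)}(r\to s)\big|\,x^{2n}=\begin{cases}(-1)^{r+s+1}\dfrac{xU_{2r-2}(x/2)U_{2k+1-2s}(x/2)}{U_{2k}(x/2)},&r<s,\\[2mm] 1-\dfrac{xU_{2r-2}(x/2)U_{2k+1-2r}(x/2)}{U_{2k}(x/2)},&r=s,\\[2mm] (-1)^{r+s+1}\dfrac{xU_{2s-2}(x/2)U_{2k+1-2r}(x/2)}{U_{2k}(x/2)},&r>s,\end{cases}$$ and $$\sum_{n\ge0}\big|\mathcal A_{2n+2}^{(k)}(r\to s)\big|\,x^{2n+1}=\begin{cases}(-1)^{r+s+1}\dfrac{xU_{2r-2}(x/2)U_{2k-2s}(x/2)}{U_{2k}(x/2)},&r\le s,\\[2mm] (-1)^{r+s+1}\dfrac{xU_{2s-1}(x/2)U_{2k-2r+1}(x/2)}{U_{2k}(x/2)},&r>s.\end{cases}$$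
   Context: For positive integers $n,k$ and $1\le r,s\le k$, $\mathcal A_n^{(k)}(r\to s)$ is the set of integer sequences $(a_1,\dots,a_n)$ with $a_1=r$, $a_n=s$, $1\le a_i\le k$ for all $i$, which are alternating in the sense $a_1\le a_2\ge a_3\le a_4\ge\cdots$, i.e. $a_{2j-1}\le a_{2j}$ and $a_{2j}\ge a_{2j+1}$ whenever the indices are in range. $U_n(x)$ is the $n$-th Chebyshev polynomial of the second kind ($U_0=1$, $U_1(x)=2x$, $U_{n+1}(x)=2xU_n(x)-U_{n-1}(x)$). *)

(* Defs.v *)
From Stdlib Require Import Reals.
From Coquelicot Require Import Coquelicot.
From mathcomp Require Import all_boot.

Set Implicit Arguments.
Unset Strict Implicit.
Unset Printing Implicit Defensive.

(* alternating in the sense a_1 <= a_2 >= a_3 <= a_4 >= ... ;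
   with 0-based indices: t_i <= t_{i+1} for even i, t_i >= t_{i+1} for odd i *)
Definition alternating (t : seq nat) : bool :=
  [forall i : 'I_(size t).-1,
     if ~~ odd i then (nth 0%N t i <= nth 0%N t i.+1)%N
     else (nth 0%N t i.+1 <= nth 0%N t i)%N].

(* Encoded as n-tuples over 'I_(k+1)
   (values 0..k) with the extra constraint that every entry is >= 1. *)
Definition Aset (n k r s : nat) : {set n.-tuple 'I_k.+1} :=
  [set t : n.-tuple 'I_k.+1 |
     [&& all (fun a : 'I_k.+1 => (1 <= a)%N) t,
         nth 0%N (map val t) 0 == r,
         nth 0%N (map val t) n.-1 == s &
         alternating (map val t)]].

Definition Acard (n k r s : nat) : nat := #|Aset n k r s|.

Open Scope R_scope.

Fixpoint ChebU (n : nat) (x : R) : R :=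
  match n with
  | O => 1
  | S m => match m with
           | O => (2 * x)
           | S p => (2 * x * ChebU m x - ChebU p x)
           end
  end.

Definition rhs_odd (k r s : nat) (x : R) : R :=
  if (r < s)%N then
    (-1) ^ (r + s + 1) * (x * ChebU (2*r - 2) (x/2) * ChebU (2*k + 1 - 2*s) (x/2))
      / ChebU (2*k) (x/2)
  else if r == s then
    1 - x * ChebU (2*r - 2) (x/2) * ChebU (2*k + 1 - 2*r) (x/2) / ChebU (2*k) (x/2)
  else
    (-1) ^ (r + s + 1) * (x * ChebU (2*s - 2) (x/2) * ChebU (2*k + 1 - 2*r) (x/2))
      / ChebU (2*k) (x/2).

Definition rhs_even (k r s : nat) (x : R) : R :=
  if (r <= s)%N then
    (-1) ^ (r + s + 1) * (x * ChebU (2*r - 2) (x/2) * ChebU (2*k - 2*s) (x/2))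
      / ChebU (2*k) (x/2)
  else
    (-1) ^ (r + s + 1) * (x * ChebU (2*s - 1) (x/2) * ChebU (2*k - 2*r + 1) (x/2))
      / ChebU (2*k) (x/2).

(* Main.v *)
Require Import Defs.
From Stdlib Require Import Reals Lra Lia Psatz.
From Coquelicot Require Import Coquelicot.
From mathcomp Require Import all_boot zify.

Set Implicit Arguments.
Unset Strict Implicit.
Unset Printing Implicit Defensive.

Open Scope nat_scope.

Definition relA (i c v : nat) : bool := if ~~ odd i then c <= v else v <= c.

Lemma forall_ordE n (P : nat -> bool) : [forall i : 'I_n, P i] = all P (iota 0 n).
Proof.
apply/forallP/allP => [H i|H i].
  by rewrite mem_iota add0n => /andP[_ hi]; exact: (H (Ordinal hi)).
by apply: H; rewrite mem_iota add0n ltn_ord.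
Qed.

Lemma alternatingE t : alternating t =
  all (fun i => relA i (nth 0 t i) (nth 0 t i.+1)) (iota 0 (size t).-1).
Proof.
rewrite /alternating; apply/forallP/allP => [H i|H i].
  by rewrite mem_iota add0n => /andP[_ hi]; have := H (Ordinal hi).
by have := H i; rewrite mem_iota add0n ltn_ord => /(_ isT).
Qed.

Lemma alternating_rcons s x : 0 < size s ->
  alternating (rcons s x) = alternating s && relA (size s).-1 (nth 0 s (size s).-1) x.
Proof.
case: s => [//|y s] _.
set t := y :: s.
rewrite !alternatingE size_rcons.
have ht : size t = size s + 1 by rewrite /t /= addn1.
rewrite ht iotaD all_cat add0n addn1 /= andbT.
congr andb.
  apply: eq_in_all => i; rewrite mem_iota add0n => /andP[_ hi].
  rewrite [nth 0 (rcons s x) i]nth_rcons hi; case: i hi => [|j] hj //=. rewrite nth_rcons; have -> : j < size s by lia. done.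
by rewrite -rcons_cons !nth_rcons /= ltnSn ltnn eqxx.
Qed.

Lemma card_sum (T : finType) (P : pred T) : #|[set t | P t]| = \sum_t (if P t then 1 else 0).
Proof.
rewrite -sum1_card big_mkcond /=; apply: eq_bigr => t _; by rewrite inE.
Qed.

Lemma sum_ord_eq k v (G : nat -> nat) : v < k.+1 ->
  \sum_(a < k.+1) (if (a == v :> nat) then G a else 0) = G v.
Proof.
move=> hv; rewrite (bigD1 (Ordinal hv)) //= eqxx big1 ?addn0 // => a.
move=> hne; case: eqP => // ha; exfalso; move/eqP: hne; apply; exact: val_inj.
Qed.

Section Count.
Variables (k r : nat).

Definition Qp n (u : n.+1.-tuple 'I_k.+1) : bool :=
  [&& all (fun a : 'I_k.+1 => 1 <= a) u, nth 0 (map val u) 0 == r & alternating (map val u)].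
Definition Lp n (u : n.+1.-tuple 'I_k.+1) : nat := nth 0 (map val u) n.

Lemma Lp_lt n (u : n.+1.-tuple 'I_k.+1) : Lp u < k.+1.
Proof. rewrite /Lp (nth_map ord0) ?size_tuple //; exact: ltn_ord. Qed.

Lemma Lp_ge1 n (u : n.+1.-tuple 'I_k.+1) : all (fun a : 'I_k.+1 => 1 <= a) u -> 1 <= Lp u.
Proof.
move/allP=> H; rewrite /Lp (nth_map ord0) ?size_tuple //.
by apply: H; apply: mem_nth; rewrite size_tuple.
Qed.

Lemma Acard_step n v : 1 <= v <= k ->
  Acard n.+2 k r v = \sum_(c < k.+1) (if (1 <= c) && relA n c v then Acard n.+1 k r c else 0).
Proof.
move=> /andP[v1 vk].
rewrite /Acard /Aset card_sum.
pose h := fun p : n.+1.-tuple 'I_k.+1 * 'I_k.+1 => [tuple of rcons p.1 p.2].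
have hbij : bijective h.
  exists (fun t : n.+2.-tuple 'I_k.+1 =>
     ([tuple of belast (thead t) (behead t)], last (thead t) (behead t))).
    case=> u a; rewrite /h /=.
    case: u => [[|y u] hu] //.

    congr pair; first apply: val_inj => /=.
      by rewrite /thead (tnth_nth y) /= belast_rcons.
    by rewrite /thead (tnth_nth y) /= last_rcons.
  move=> t; apply: val_inj; rewrite /h /=.
  by rewrite -lastI [in RHS](tuple_eta t).
rewrite (reindex h) /=; last by apply: onW_bij.
transitivity (\sum_(u : n.+1.-tuple 'I_k.+1) \sum_(a : 'I_k.+1)
  (if [&& all (fun a : 'I_k.+1 => 0 < a) (rcons u a),
           nth 0 [seq val i | i <- rcons u a] 0 == r,
           nth 0 [seq val i | i <- rcons u a] n.+1 == v
         & alternating [seq val i | i <- rcons u a]] then 1 else 0)).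
  by rewrite pair_bigA.
transitivity (\sum_(u : n.+1.-tuple 'I_k.+1) (if Qp u && relA n (Lp u) v then 1 else 0)).
  apply: eq_bigr => u _.
  rewrite -[RHS](@sum_ord_eq k v (fun _ => if Qp u && relA n (Lp u) v then 1 else 0)); last by [].
  apply: eq_bigr => a _.
  have hs : size (map val u) = n.+1 by rewrite size_map size_tuple.
  rewrite map_rcons all_rcons !nth_rcons hs ltnn eqxx alternating_rcons ?hs //=.
  rewrite /Qp /Lp.
  case: a => a ha /=. case: (boolP (a == v)) => [/eqP ->|hne]; last by rewrite /= !andbF.
  rewrite v1 /=.
  by case: (all _ _); case: (_ == r); case: (alternating _); case: (relA _ _ _).
transitivity (\sum_(c < k.+1) \sum_(u : n.+1.-tuple 'I_k.+1)
     (if (1 <= c) && relA n c v then (if (Lp u == c) && Qp u then 1 else 0) else 0)).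
  rewrite exchange_big /=; apply: eq_bigr => u _.
  transitivity (if (0 < Lp u) && relA n (Lp u) v then (if Qp u then 1 else 0) else 0).
    case hq: (Qp u); last by rewrite /=; case: ifP.
    have := hq; case/and3P => hall _ _; by rewrite (Lp_ge1 hall).
  rewrite -[LHS](@sum_ord_eq k (Lp u) (fun c => if (1 <= c) && relA n c v then (if Qp u then 1 else 0) else 0)); last exact: Lp_lt.
  apply: eq_bigr => c _.
  case: c => c hc /=.
  case: (boolP (c == Lp u)) => [/eqP <-|hne].
    by rewrite eqxx; case: (1 <= c); case: (relA _ _ _); case: (Qp _).
  have -> : (Lp u == c) = false by apply/negbTE; rewrite eq_sym.
  by case: ifP.
apply: eq_bigr => c _.
case: ifP => _; last by rewrite big1.
rewrite card_sum; apply: eq_bigr => u _.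
rewrite /Qp /Lp.
set A := all _ _. set B := (nth 0 _ 0 == r). set C := alternating _. set D := (nth 0 _ n == _).
by case: A; case: B; case: C; case: D.
Qed.

End Count.

Lemma Acard1 k r s : 1 <= r <= k -> Acard 1 k r s = if r == s then 1 else 0.
Proof.
move=> /andP[r1 rk].
rewrite /Acard /Aset card_sum.
pose h := fun a : 'I_k.+1 => [tuple a].
have hbij : bijective h.
  exists (fun t : 1.-tuple 'I_k.+1 => thead t) => [a //|t].
  apply: val_inj; case: t => [[|x [|y s0]] //= hs].
rewrite (reindex h) /=; last by apply: onW_bij.
rewrite -[RHS](@sum_ord_eq k r (fun _ => if r == s then 1 else 0)); last by [].
apply: eq_bigr => a _.
rewrite alternatingE /= andbT.
case: a => a ha /=.
case: (boolP (a == r)) => [/eqP ->|hne]; last by rewrite andbF.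
by rewrite r1 andbT.
Qed.

Lemma Acard_le m k r s : Acard m k r s <= k.+1 ^ m.
Proof.
rewrite /Acard; apply: leq_trans (max_card _) _.
by rewrite card_tuple card_ord.
Qed.


Unset Implicit Arguments.
Open Scope R_scope.

Open Scope R_scope.

Lemma ChebU_SS m y : ChebU m.+2 y = 2 * y * ChebU m.+1 y - ChebU m y.
Proof. reflexivity. Qed.

Lemma Vrec x a b c : (a = c.+2)%N -> (b = c.+1)%N ->
  ChebU a (x/2) = x * ChebU b (x/2) - ChebU c (x/2).
Proof. move=> -> ->; rewrite ChebU_SS; field. Qed.

Lemma V0 x a : (a = 0)%N -> ChebU a (x/2) = 1.
Proof. by move=> ->. Qed.

Lemma V1 x a : (a = 1)%N -> ChebU a (x/2) = x.
Proof. move=> ->; simpl; field. Qed.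

Lemma Vprod x a b : ChebU a.+1 (x/2) * ChebU b.+1 (x/2) - ChebU a (x/2) * ChebU b (x/2)
  = ChebU (a + b).+2 (x/2).
Proof.
elim: a b => [|a IH] b.
  rewrite add0n ChebU_SS /=; field.
have := IH b.+1; rewrite addnS => <-.
rewrite !ChebU_SS; ring.
Qed.

Lemma sgnS n m : (m = n.+1)%N -> (-1) ^ m = - (-1) ^ n.
Proof. move=> ->; simpl; ring. Qed.
Lemma sgnE n m : (m = 2 * n)%N -> (-1) ^ m = 1.
Proof. move=> ->. rewrite pow_1_even //. Qed.
Lemma sgnO n m : (m = (2 * n).+1)%N -> (-1) ^ m = -1.
Proof. move=> ->. rewrite pow_1_odd //. Qed.
Lemma Vprod' x a b a1 b1 n : (a1 = a.+1)%N -> (b1 = b.+1)%N -> (n = (a+b).+2)%N ->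
  ChebU a1 (x/2) * ChebU b1 (x/2) - ChebU a (x/2) * ChebU b (x/2) = ChebU n (x/2).
Proof. move=> -> -> ->; exact: Vprod. Qed.

Open Scope R_scope.

Ltac dec := repeat match goal with
 | H : is_true (_ == _) |- _ => move/eqP: H => H
 | H : (_ == _) = true |- _ => move/eqP: H => H
 | H : (_ == _) = false |- _ => move/negbT/eqP: H => H
 end.
Ltac splitifs := repeat (case: ifP => ?); dec; try (exfalso; lia).

Lemma idQ1 k r x : (1 <= r)%N -> (r <= k)%N -> ChebU (2*k) (x/2) <> 0 ->
  rhs_even k r 1 x = x * rhs_odd k r 1 x.
Proof.
move=> r1 rk hW.
rewrite /rhs_even /rhs_odd.
set W := ChebU (2*k) (x/2).
splitifs.
- have hW' : W = x * ChebU (2*k+1-2*r) (x/2) - ChebU (2*k - 2*1) (x/2) by apply: Vrec; lia.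
  rewrite (@V0 x (2*r-2)); last lia.
  rewrite (@sgnS 2 (r+1+1)); last lia.
  rewrite hW'; field; rewrite -hW'; exact hW.
- rewrite (@V0 x (2*1-2)) // (@V1 x (2*1-1)) //.
  rewrite (_ : (2 * k - 2 * r + 1 = 2 * k + 1 - 2 * r)%N); last lia.
  field; exact hW.
Qed.

Lemma idQs k r s x : (1 <= r)%N -> (r <= k)%N -> (1 <= s)%N -> (s.+1 <= k)%N ->
  ChebU (2*k) (x/2) <> 0 ->
  rhs_even k r s.+1 x = rhs_even k r s x + x * rhs_odd k r s.+1 x.
Proof.
move=> r1 rk s1 sk hW.
rewrite /rhs_even /rhs_odd.
set W := ChebU (2*k) (x/2).
have [h|h|h] := ltngtP r s.+1.
- splitifs.
  rewrite (@sgnS (r+s+1) (r+s.+1+1)); last lia.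
  rewrite (@Vrec x (2*k-2*s) (2*k+1-2*s.+1) (2*k-2*s.+1)); try lia.
  field; exact hW.
- splitifs.
  rewrite (@sgnS (r+s+1) (r+s.+1+1)); last lia.
  rewrite (@Vrec x (2*s.+1-1) (2*s.+1-2) (2*s-1)); try lia.
  rewrite (_ : (2*k-2*r+1 = 2*k+1-2*r)%N); last lia.
  field; exact hW.
- subst r. splitifs.
  rewrite (@sgnO (s.+1) (s.+1+s.+1+1)); last lia.
  rewrite (@sgnE (s.+1) (s.+1+s+1)); last lia.
  rewrite (_ : (2*k-2*s.+1+1 = 2*k+1-2*s.+1)%N); last lia.
  have hW' : W = ChebU (2*s.+1-2) (x/2) * ChebU (2*k+1-2*s.+1).+1 (x/2)
                 - ChebU (2*s-1) (x/2) * ChebU (2*k+1-2*s.+1) (x/2).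
    by rewrite /W; symmetry; apply: Vprod'; lia.
  rewrite (@Vrec x ((2*k+1-2*s.+1).+1) (2*k+1-2*s.+1) (2*k-2*s.+1)) in hW'; try lia.
  rewrite hW'; field; rewrite -hW'; exact hW.
Qed.

Lemma idPk k r x : (1 <= r)%N -> (r <= k)%N -> ChebU (2*k) (x/2) <> 0 ->
  rhs_odd k r k x = (if r == k then 1 else 0) + x * rhs_even k r k x.
Proof.
move=> r1 rk hW.
rewrite /rhs_even /rhs_odd.
set W := ChebU (2*k) (x/2).
have [h|h|h] := ltngtP r k.
- splitifs.
  rewrite (@V1 x (2*k+1-2*k)) ?(@V0 x (2*k-2*k)); try lia.
  field; exact hW.
- exfalso; lia.
- subst r. splitifs.
  rewrite (@sgnO k (k+k+1)); last lia.
  rewrite (@V1 x (2*k+1-2*k)) ?(@V0 x (2*k-2*k)); try lia.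
  field; exact hW.
Qed.

Lemma idPs k r s x : (1 <= r)%N -> (r <= k)%N -> (1 <= s)%N -> (s.+1 <= k)%N ->
  ChebU (2*k) (x/2) <> 0 ->
  rhs_odd k r s x + (if r == s.+1 then 1 else 0) =
  (if r == s then 1 else 0) + x * rhs_even k r s x + rhs_odd k r s.+1 x.
Proof.
move=> r1 rk s1 sk hW.
rewrite /rhs_even /rhs_odd.
set W := ChebU (2*k) (x/2).
have [h|h|h] := ltngtP r s.
- splitifs.
  rewrite (@sgnS (r+s+1) (r+s.+1+1)); last lia.
  rewrite (@Vrec x (2*k+1-2*s) (2*k-2*s) (2*k+1-2*s.+1)); try lia.
  field; exact hW.
- have [h2|h2|h2] := ltngtP r s.+1; first (exfalso; lia).
  + splitifs.
    rewrite (@sgnS (r+s+1) (r+s.+1+1)); last lia.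
    rewrite (@Vrec x (2*s.+1-2) (2*s-1) (2*s-2)); try lia.
    rewrite (_ : (2*k-2*r+1 = 2*k+1-2*r)%N); last lia.
    field; exact hW.
  + subst r. splitifs.
    rewrite (@sgnE (s.+1) (s.+1+s+1)); last lia.
    rewrite (@Vrec x (2*s.+1-2) (2*s-1) (2*s-2)); try lia.
    rewrite (_ : (2*k-2*s.+1+1 = 2*k+1-2*s.+1)%N); last lia.
    field; exact hW.
- subst r. splitifs.
  rewrite (@sgnO s (s+s+1)); last lia.
  rewrite (@sgnE (s.+1) (s+s.+1+1)); last lia.
  rewrite (@Vrec x (2*k+1-2*s) (2*k-2*s) (2*k+1-2*s.+1)); try lia.
  field; exact hW.
Qed.

Open Scope R_scope.

Fixpoint rsum (f : nat -> R) (n : nat) : R :=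
  match n with O => 0 | S m => rsum f m + f m end.

Lemma rsum_ext f g n : (forall c, (c < n)%N -> f c = g c) -> rsum f n = rsum g n.
Proof.
elim: n => //= n IH H; rewrite IH ?H // => c hc; apply: H; lia.
Qed.

Lemma rsum_plus f g n : rsum (fun c => f c + g c) n = rsum f n + rsum g n.
Proof. elim: n => /= [|n ->]; ring. Qed.

Lemma rsum_scal a f n : rsum (fun c => a * f c) n = a * rsum f n.
Proof. elim: n => /= [|n ->]; ring. Qed.

Lemma rsum_S f n : rsum f n.+1 = rsum f n + f n.
Proof. by []. Qed.

Lemma rsum_const a n : rsum (fun _ => a) n = INR n * a.
Proof. elim: n => [|n IH]; first (simpl; ring). rewrite rsum_S IH S_INR; ring. Qed.

Lemma rsum_delta f j n : (j < n)%N -> rsum (fun c => if c == j then f c else 0) n = f j.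
Proof.
elim: n => // n IH hj; rewrite rsum_S.
case: (ltngtP j n) => h.
- rewrite IH //; first ((case: eqP => ?; [exfalso; lia | ring]) || ring).
- exfalso; lia.
- subst j.
  rewrite (@rsum_ext _ (fun _ => 0)); last by move=> c hc; case: eqP => [?|//]; exfalso; lia.
  rewrite rsum_const; (case: eqP => [_|//]; ring) || ring.
Qed.

Lemma rsum_le f g n : (forall c, (c < n)%N -> f c <= g c) -> rsum f n <= rsum g n.
Proof.
elim: n => /= [|n IH H]; first lra.
have := H n (ltnSn n); have : rsum f n <= rsum g n by apply: IH => c hc; apply: H; lia.
lra.
Qed.

Lemma rsum_abs f n : Rabs (rsum f n) <= rsum (fun c => Rabs (f c)) n.
Proof.
elim: n => /= [|n IH]; first by rewrite Rabs_R0; lra.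
apply: Rle_trans (Rabs_triang _ _) _; lra.
Qed.

Lemma rsum_ge0 f n : (forall c, (c < n)%N -> 0 <= f c) -> 0 <= rsum f n.
Proof.
move=> H; have := @rsum_le (fun _ => 0) f n H; rewrite rsum_const; lra.
Qed.

Lemma rsum_term f j n : (forall c, (c < n)%N -> 0 <= f c) -> (j < n)%N -> f j <= rsum f n.
Proof.
move=> H hj.
rewrite -(@rsum_delta f j n hj).
apply: rsum_le => c hc; case: eqP => _; [lra|exact: H].
Qed.

Ltac fin := move=> /=; repeat (case: ifP => ?); dec; try (exfalso; lia);
  repeat match goal with H : ?c = _ |- _ => is_var c; subst c end; try ring.

Section Tel.
Variables (k r : nat) (x : R).
Hypotheses (r1 : (1 <= r)%N) (rk : (r <= k)%N) (hW : ChebU (2*k) (x/2) <> 0).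

Lemma telQ s : (1 <= s)%N -> (s <= k)%N ->
  rhs_even k r s x = x * rsum (fun c => if (1 <= c <= s)%N then rhs_odd k r c x else 0) k.+1.
Proof.
elim: s => // s IH _ hs.
case: (posnP s) => [->|s0].
  rewrite idQ1 //; congr (_ * _).
  rewrite -(@rsum_delta (fun c => rhs_odd k r c x) 1 k.+1); last lia.
  apply: rsum_ext => c _; fin.
rewrite idQs // IH //; last lia.
rewrite -Rmult_plus_distr_l; congr (_ * _).
rewrite -(@rsum_delta (fun c => rhs_odd k r c x) s.+1 k.+1); last lia.
rewrite -rsum_plus; apply: rsum_ext => c _; fin.
Qed.

Lemma telP_aux d : forall s, (s + d)%N = k -> (1 <= s)%N ->
  rhs_odd k r s x = (if r == s then 1 else 0) +
    x * rsum (fun c => if ((1 <= c) && (s <= c))%N then rhs_even k r c x else 0) k.+1.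
Proof.
elim: d => [|d IH] s hsd s1.
  have hs : s = k by lia. subst s.
  rewrite idPk //; congr (_ + _ * _).
  rewrite -(@rsum_delta (fun c => rhs_even k r c x) k k.+1); last lia.
  apply: rsum_ext => c hc; fin.
have := @idPs k r s x r1 rk s1 ltac:(lia) hW.
rewrite (IH s.+1) //; try lia.
move=> H.
have -> : rhs_odd k r s x = (if r == s then 1 else 0) + x * rhs_even k r s x +
   x * rsum (fun c => if ((1 <= c) && (s.+1 <= c))%N then rhs_even k r c x else 0) k.+1 by lra.
rewrite Rplus_assoc -Rmult_plus_distr_l; congr (_ + _ * _).
rewrite -(@rsum_delta (fun c => rhs_even k r c x) s k.+1); last lia.
rewrite -rsum_plus; apply: rsum_ext => c _; fin.
Qed.

Lemma telP s : (1 <= s)%N -> (s <= k)%N ->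
  rhs_odd k r s x = (if r == s then 1 else 0) +
    x * rsum (fun c => if ((1 <= c) && (s <= c))%N then rhs_even k r c x else 0) k.+1.
Proof. move=> s1 sk; apply: (@telP_aux (k - s)) => //; lia. Qed.

End Tel.

Open Scope R_scope.

Lemma abs_if_le (b : bool) (a : R) (b' : bool) : (b -> b') ->
  Rabs (if b then a else 0) <= (if b' then Rabs a else 0).
Proof.
case: b; case: b' => //= H; try lra; first by have := H isT.
rewrite Rabs_R0; have := Rabs_pos a; lra.
rewrite Rabs_R0; lra.
Qed.

Lemma uniq_sys k x (D E : nat -> R) : INR k.+1 * Rabs x < 1 ->
  (forall s, (1 <= s)%N -> (s <= k)%N ->
     E s = x * rsum (fun c => if (1 <= c <= s)%N then D c else 0) k.+1) ->
  (forall s, (1 <= s)%N -> (s <= k)%N ->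
     D s = x * rsum (fun c => if ((1 <= c) && (s <= c))%N then E c else 0) k.+1) ->
  forall s, (1 <= s)%N -> (s <= k)%N -> D s = 0 /\ E s = 0.
Proof.
move=> hx HE HD.
set SD := rsum (fun c => if (1 <= c)%N then Rabs (D c) else 0) k.+1.
set SE := rsum (fun c => if (1 <= c)%N then Rabs (E c) else 0) k.+1.
have hSD : 0 <= SD by apply: rsum_ge0 => c _; case: ifP => _; [apply: Rabs_pos|lra].
have hSE : 0 <= SE by apply: rsum_ge0 => c _; case: ifP => _; [apply: Rabs_pos|lra].
have hax := Rabs_pos x.
have bE : forall s, (1 <= s)%N -> (s <= k)%N -> Rabs (E s) <= Rabs x * SD.
  move=> s s1 sk; rewrite HE // Rabs_mult.
  apply: Rmult_le_compat_l => //.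
  apply: Rle_trans (rsum_abs _ _) _.
  apply: rsum_le => c _; apply: abs_if_le => /andP[] //.
have bD : forall s, (1 <= s)%N -> (s <= k)%N -> Rabs (D s) <= Rabs x * SE.
  move=> s s1 sk; rewrite HD // Rabs_mult.
  apply: Rmult_le_compat_l => //.
  apply: Rle_trans (rsum_abs _ _) _.
  apply: rsum_le => c _; apply: abs_if_le => /andP[] //.
have bSE : SE <= INR k.+1 * (Rabs x * SD).
  rewrite -rsum_const /SE; apply: rsum_le => c hc.
  case: ifP => h; first by apply: bE => //; lia.
  have := Rmult_le_pos _ _ hax hSD; lra.
have bSD : SD <= INR k.+1 * (Rabs x * SE).
  rewrite -rsum_const /SD; apply: rsum_le => c hc.
  case: ifP => h; first by apply: bD => //; lia.
  have := Rmult_le_pos _ _ hax hSE; lra.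
have hq : 0 <= INR k.+1 * Rabs x by apply: Rmult_le_pos => //; apply: pos_INR.
set q := INR k.+1 * Rabs x in hx hq.
have eSD : SD = 0.
  have h1 : SD <= q * q * SD.
    apply: Rle_trans bSD _; rewrite /q.
    have : INR k.+1 * Rabs x * SE <= INR k.+1 * Rabs x * (INR k.+1 * (Rabs x * SD)).
      by apply: Rmult_le_compat_l.
    nra.
  have hqq : q * q < 1 by nra.
  apply: Rle_antisym; last lra.
  have : SD * (1 - q * q) <= 0 by lra.
  nra.
have eSE : SE = 0.
  have : SE <= q * SD by rewrite /q; nra.
  rewrite eSD; lra.
move=> s s1 sk; split; apply: Rabs_eq_0.
  have := bD s s1 sk; rewrite eSE; have := Rabs_pos (D s); lra.
have := bE s s1 sk; rewrite eSD; have := Rabs_pos (E s); lra.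
Qed.

Open Scope R_scope.

Lemma is_series_zero : is_series (fun _ : nat => 0) 0.
Proof.
have H := is_series_scal 0 _ _ (is_series_geom 0 ltac:(rewrite Rabs_R0; lra)).
have -> : (0:R) = scal 0 (/ (1 - 0)) by rewrite /scal /= /mult /=; ring.
apply: is_series_ext H => n; rewrite /scal /= /mult /=; ring.
Qed.

Lemma is_series_rsum (u : nat -> nat -> R) (l : nat -> R) N :
  (forall c, is_series (u c) (l c)) ->
  is_series (fun n => rsum (fun c => u c n) N) (rsum l N).
Proof.
move=> H; elim: N => [|N IH]; first exact: is_series_zero.
exact: is_series_plus.
Qed.

Lemma INR_sum N (F : nat -> nat) :
  INR (\sum_(c < N) F c) = rsum (fun c => INR (F c)) N.
Proof.
elim: N => [|N IH]; first by rewrite big_ord0.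
rewrite big_ord_recr /= -IH.
exact: plus_INR.
Qed.

Lemma rsum_scal_r a f n : rsum (fun c => f c * a) n = rsum f n * a.
Proof. elim: n => [|n IH]; first (simpl; ring). rewrite !rsum_S IH; ring. Qed.

Lemma powE0 y n : y ^ (2 * n) = (y ^ 2) ^ n.
Proof. rewrite pow_mult //. Qed.
Lemma powE1 y n : y ^ (2 * n + 1) = y * y ^ (2 * n).
Proof. rewrite (_ : (2 * n + 1 = (2 * n).+1)%N); last lia. by []. Qed.
Lemma powE2 y n : y ^ (2 * n.+1) = y * y ^ (2 * n + 1).
Proof. rewrite (_ : (2 * n.+1 = (2 * n + 1).+1)%N); last lia. by []. Qed.

Lemma INR_expn a m : INR (expn a m) = INR a ^ m.
Proof.
elim: m => [|m IH]; first by rewrite expn0.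
rewrite expnS mult_INR IH; by [].
Qed.

Section Ser.
Variables (k r : nat) (x : R).
Hypotheses (r1 : (1 <= r)%N) (rk : (r <= k)%N).

Definition aa s n := INR (Acard (2*n + 1) k r s) * x ^ (2*n).
Definition bb s n := INR (Acard (2*n + 2) k r s) * x ^ (2*n + 1).

Lemma bb_eq s n : (1 <= s)%N -> (s <= k)%N ->
  bb s n = x * rsum (fun c => if (1 <= c <= s)%N then aa c n else 0) k.+1.
Proof.
move=> s1 sk.
rewrite /bb (_ : (2*n+2 = (2*n).+2)%N); last lia.
rewrite Acard_step ?s1 // (@INR_sum k.+1 (fun c => if (1 <= c)%N && relA (2*n) c s then Acard (2*n).+1 k r c else 0%N)) -rsum_scal -rsum_scal_r.
apply: rsum_ext => c _.
rewrite /relA oddM /= /aa powE1.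
rewrite (_ : ((2*n).+1 = 2*n+1)%N); last lia.
case: ifP => _ /=; ring.
Qed.

Lemma aa_S s n : (1 <= s)%N -> (s <= k)%N ->
  aa s n.+1 = x * rsum (fun c => if ((1 <= c) && (s <= c))%N then bb c n else 0) k.+1.
Proof.
move=> s1 sk.
rewrite /aa (_ : (2*n.+1+1 = (2*n+1).+2)%N); last lia.
rewrite Acard_step ?s1 // (@INR_sum k.+1 (fun c => if (1 <= c)%N && relA (2*n+1) c s then Acard (2*n+1).+1 k r c else 0%N)) -rsum_scal -rsum_scal_r.
apply: rsum_ext => c _.
rewrite /relA.
have -> : odd (2*n+1) = true by rewrite oddD oddM.
rewrite (_ : (if ~~ true then (c <= s)%N else (s <= c)%N) = (s <= c)%N) //.
rewrite /bb powE2 (_ : ((2*n+1).+1 = 2*n+2)%N); last lia.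
case: ifP => _ /=; ring.
Qed.

Lemma aa_0 s : aa s 0 = if r == s then 1 else 0.
Proof.
rewrite /aa Acard1 ?r1 //=; case: ifP => _ /=; ring.
Qed.

Lemma aa_bound s n : Rabs (aa s n) <= INR k.+1 * ((INR k.+1 * Rabs x) ^ 2) ^ n.
Proof.
rewrite /aa Rabs_mult Rabs_right; last by apply: Rle_ge; apply: pos_INR.
rewrite -RPow_abs.
have h1 : INR (Acard (2*n+1) k r s) <= INR k.+1 ^ (2*n+1).
  rewrite -INR_expn; apply: le_INR; apply/leP; exact: Acard_le.
rewrite -powE0 Rpow_mult_distr; rewrite powE1 in h1.
have := pow_le (Rabs x) (2*n) (Rabs_pos x).
nra.
Qed.

Lemma bb_bound s n : INR k.+1 * Rabs x <= 1 ->
  Rabs (bb s n) <= INR k.+1 * ((INR k.+1 * Rabs x) ^ 2) ^ n.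
Proof.
move=> hx.
rewrite /bb Rabs_mult Rabs_right; last by apply: Rle_ge; apply: pos_INR.
rewrite -RPow_abs.
have h1 : INR (Acard (2*n+2) k r s) <= INR k.+1 ^ (2*n+2).
  rewrite -INR_expn; apply: le_INR; apply/leP; exact: Acard_le.
have hK : 0 <= INR k.+1 by apply: pos_INR.
have hpow := pow_le (INR k.+1 * Rabs x) (2*n) (Rmult_le_pos _ _ hK (Rabs_pos x)).
have e1 : INR k.+1 ^ (2*n+2) * Rabs x ^ (2*n+1) = INR k.+1 * (INR k.+1 * Rabs x) ^ (2*n) * (INR k.+1 * Rabs x).
  rewrite Rpow_mult_distr powE1 (_ : (2*n+2 = (2*n+1).+1)%N); last lia.
  rewrite /= powE1; ring.
rewrite -powE0.
have := pow_le (Rabs x) (2*n+1) (Rabs_pos x).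
move=> h2.
apply: Rle_trans (_ : INR (Acard (2 * n + 2) k r s) * Rabs x ^ (2 * n + 1) <= INR k.+1 ^ (2*n+2) * Rabs x ^ (2*n+1)) _.
  by apply: Rmult_le_compat_r.
rewrite e1.
have := Rmult_le_pos _ _ hK hpow.
have : 0 <= INR k.+1 * Rabs x by apply: Rmult_le_pos => //; apply: Rabs_pos.
nra.
Qed.

End Ser.

Open Scope R_scope.

Lemma Cheb0 n : ChebU (2*n) 0 = (-1) ^ n /\ ChebU (2*n).+1 0 = 0.
Proof.
elim: n => [|n [IH1 IH2]]; first by split; [reflexivity | simpl; ring].
rewrite (_ : (2 * n.+1 = (2*n).+2)%N); last lia.
split; rewrite ChebU_SS ?IH1 ?IH2 /=; first ring.
ring.
Qed.

Lemma Cheb_cont n : continuity_pt (fun y => ChebU n (y/2)) 0 /\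
                    continuity_pt (fun y => ChebU n.+1 (y/2)) 0.
Proof.
elim: n => [|n [IH1 IH2]].
  split; simpl; reg.
split => //.
change (continuity_pt (fun y => 2 * (y/2) * ChebU n.+1 (y/2) - ChebU n (y/2)) 0).
apply: continuity_pt_minus => //.
apply: continuity_pt_mult => //; reg.
Qed.

Lemma W_nonzero k : exists d, 0 < d /\ forall x, Rabs x < d -> ChebU (2*k) (x/2) <> 0.
Proof.
have [_ h0] := Cheb0 k.
have [h1 _] := Cheb0 k.
have [H _] := Cheb_cont (2*k).
have [d [hd Hd]] := H 1 Rlt_0_1.
exists d; split => // x hx.
have e0 : ChebU (2*k) (0/2) = (-1)^k by rewrite (_ : 0/2 = 0); [exact h1 | field].
case: (Req_dec x 0) => [->|hx0].
  rewrite e0 => e; have := pow_1_abs k; rewrite e Rabs_R0; lra.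
have := Hd x; rewrite /dist /= /R_dist e0 => Hx.
move=> e.
have hx' : Rabs (x - 0) < d by rewrite Rminus_0_r.
have := Hx (conj (conj I (not_eq_sym hx0)) hx').
rewrite e Rminus_0_l Rabs_Ropp pow_1_abs; lra.
Qed.

Open Scope R_scope.

Lemma rsum_minus f g n : rsum (fun c => f c - g c) n = rsum f n - rsum g n.
Proof. elim: n => [|n IH]; first (simpl; ring). rewrite !rsum_S IH; ring. Qed.

Lemma if_minus (b : bool) (a c : R) : (if b then a - c else 0) = (if b then a else 0) - (if b then c else 0).
Proof. case: b; ring. Qed.

Theorem theorem4 (k r s : nat) :
  (1 <= r)%N -> (r <= k)%N -> (1 <= s)%N -> (s <= k)%N ->
  exists eps : R, Rlt 0 eps /\
    forall x : R, Rlt (Rabs x) eps ->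
      is_series (fun n : nat => Rmult (INR (Acard (2*n + 1) k r s)) (pow x (2*n)))
                (rhs_odd k r s x)
   /\ is_series (fun n : nat => Rmult (INR (Acard (2*n + 2) k r s)) (pow x (2*n + 1)))
                (rhs_even k r s x).
Proof.
move=> r1 rk s1 sk.
have [d [hd Hd]] := W_nonzero k.
have hK : 0 < INR k.+1 by apply: lt_0_INR; lia.
exists (Rmin d (/ INR k.+1)); split.
  apply: Rmin_pos => //; exact: Rinv_0_lt_compat.
move=> x hx.
have hW : ChebU (2*k) (x/2) <> 0.
  apply: Hd; apply: Rlt_le_trans hx _; exact: Rmin_l.
have hKx : INR k.+1 * Rabs x < 1.
  have : Rabs x < / INR k.+1 by apply: Rlt_le_trans hx _; exact: Rmin_r.
  move=> h; have := Rmult_lt_compat_l _ _ _ hK h.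
  rewrite Rinv_r; lra.
have hq : Rabs ((INR k.+1 * Rabs x) ^ 2) < 1.
  have h0 : 0 <= INR k.+1 * Rabs x by apply: Rmult_le_pos; [lra|apply: Rabs_pos].
  rewrite Rabs_right; [nra | apply: Rle_ge; nra].
have exG : ex_series (fun n => INR k.+1 * ((INR k.+1 * Rabs x) ^ 2) ^ n).
  exact: (ex_series_scal (INR k.+1) _ (ex_series_geom _ hq)).
have hA : forall s, is_series (aa k r x s) (Series (aa k r x s)).
  move=> s'; apply: Series_correct; apply: (ex_series_le _ _ _ exG) => n.
  exact: aa_bound.
have hB : forall s, is_series (bb k r x s) (Series (bb k r x s)).
  move=> s'; apply: Series_correct; apply: (ex_series_le _ _ _ exG) => n.
  exact: (@bb_bound k r x r1 rk s' n (Rlt_le _ _ hKx)).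
set A := fun s => Series (aa k r x s).
set B := fun s => Series (bb k r x s).
have sysB : forall s, (1 <= s)%N -> (s <= k)%N ->
    B s = x * rsum (fun c => if (1 <= c <= s)%N then A c else 0) k.+1.
  move=> s' s'1 s'k.
  have H : forall c, is_series (fun n => if (1 <= c <= s')%N then aa k r x c n else 0)
                               (if (1 <= c <= s')%N then A c else 0).
    by move=> c; case: ifP => _; [exact: hA | exact: is_series_zero].
  have := is_series_scal x _ _ (is_series_rsum _ _ k.+1 H).
  move=> H2; apply: is_series_unique.
  apply: is_series_ext H2 => n; rewrite bb_eq //.
have sysA : forall s, (1 <= s)%N -> (s <= k)%N ->
    A s = (if r == s then 1 else 0) +
          x * rsum (fun c => if ((1 <= c) && (s <= c))%N then B c else 0) k.+1.
  move=> s' s'1 s'k.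
  have H : forall c, is_series (fun n => if ((1 <= c) && (s' <= c))%N then bb k r x c n else 0)
                               (if ((1 <= c) && (s' <= c))%N then B c else 0).
    by move=> c; case: ifP => _; [exact: hB | exact: is_series_zero].
  have := is_series_scal x _ _ (is_series_rsum _ _ k.+1 H).
  move=> H2; apply: is_series_unique.
  apply: is_series_decr_1.
  rewrite -(@aa_0 k r x r1 rk s').
  set L := x * rsum _ _.
  have -> : plus (aa k r x s' 0 + L) (opp (aa k r x s' 0)) = L.
    change (aa k r x s' 0 + L - aa k r x s' 0 = L); ring.
  apply: is_series_ext H2 => n; rewrite aa_S //.
have U := @uniq_sys k x (fun s => A s - rhs_odd k r s x) (fun s => B s - rhs_even k r s x) hKx.
have HE : forall s', (1 <= s')%N -> (s' <= k)%N ->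
    B s' - rhs_even k r s' x =
    x * rsum (fun c => if (1 <= c <= s')%N then A c - rhs_odd k r c x else 0) k.+1.
  move=> s' s'1 s'k; rewrite sysB // telQ // -Rmult_minus_distr_l -rsum_minus.
  congr (_ * _); apply: rsum_ext => c _; rewrite if_minus //.
have HD : forall s', (1 <= s')%N -> (s' <= k)%N ->
    A s' - rhs_odd k r s' x =
    x * rsum (fun c => if ((1 <= c) && (s' <= c))%N then B c - rhs_even k r c x else 0) k.+1.
  move=> s' s'1 s'k; rewrite sysA // telP //.
  have -> : forall a b c : R, a + b - (a + c) = b - c by move=> *; ring.
  rewrite -Rmult_minus_distr_l -rsum_minus.
  congr (_ * _); apply: rsum_ext => c _; rewrite if_minus //.
have [hD hE] := U HE HD s s1 sk.
split.
  have -> : rhs_odd k r s x = A s by lra.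
  exact: hA.
have -> : rhs_even k r s x = B s by lra.
exact: hB.
Qed.
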